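(* For every integer $n\geq 2$, $$\sum_{k=1}^{n}B_{2k}B_{2n-2k}=\frac{1}{n+1}\sum_{k=1}^{n}B_{2k}B_{2n-2k}\binom{2n+2}{2k+2}+2nB_{2n}.$$
   Context: $B_n$ denotes the Bernoulli numbers, defined by $\frac{x}{e^x-1}=\sum_{n\ge 0}B_n\frac{x^n}{n!}$ (so $B_0=1$). *)

(* Defs.v *)
From mathcomp Require Import all_boot all_order all_algebra.
Set Implicit Arguments. Unset Strict Implicit. Unset Printing Implicit Defensive.
Import GRing.Theory Num.Theory.
Local Open Scope ring_scope.

(* Bernoulli numbers (rational), convention x/(e^x-1) = sum B_n x^n/n!,
   so B_0 = 1, B_1 = -1/2.  Equivalently (comparing coefficients of
   x = (e^x - 1) * sum B_n x^n/n!):  B_0 = 1 and for m >= 1,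
   sum_{k=0}^{m} C(m+1,k) B_k = 0, i.e.
   B_m = - 1/(m+1) * sum_{k<m} C(m+1,k) B_k. *)

Fixpoint bern_list (m : nat) : seq rat :=
  match m with
  | O => [:: 1]
  | m'.+1 =>
      let s := bern_list m' in
      rcons s (- (m'.+2%:R)^-1 *
               \sum_(k < m'.+1) ('C(m'.+2, k))%:R * nth 0 s k)
  end.

Definition bernoulli (n : nat) : rat := nth 0 (bern_list n) n.

(* Main.v *)
Require Import Defs.
From mathcomp Require Import all_boot all_order all_algebra ring.
Set Implicit Arguments. Unset Strict Implicit. Unset Printing Implicit Defensive.
Import GRing.Theory Num.Theory.
From mathcomp Require Import zify.
Local Open Scope ring_scope.



Lemma size_bern_list m : size (bern_list m) = m.+1.
Proof. by elim: m => //= m IH; rewrite size_rcons IH. Qed.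

Lemma nth_bern_list m k : (k <= m)%N -> nth 0 (bern_list m) k = bernoulli k.
Proof.
elim: m k => [|m IH] k hk.
  by move: hk; rewrite leqn0 => /eqP ->.
rewrite leq_eqVlt in hk; case/orP: hk => [/eqP ->|hk]; first by [].
rewrite /= nth_rcons size_bern_list hk; exact: IH.
Qed.

Lemma bern_rec m : bernoulli m.+1 =
  - (m.+2%:R)^-1 * \sum_(k < m.+1) ('C(m.+2, k))%:R * bernoulli k.
Proof.
rewrite /bernoulli /= nth_rcons size_bern_list ltnn eqxx.
congr (_ * _); apply: eq_bigr => k _; rewrite nth_bern_list //.
by rewrite -ltnS.
Qed.

Lemma bern0 : bernoulli 0 = 1.
Proof. by []. Qed.

Lemma bern_sum i : (0 < i)%N ->
  \sum_(j < i.+1) ('C(i.+1, j))%:R * bernoulli j = 0.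
Proof.
case: i => // m _.
rewrite big_ord_recr /= bern_rec binSn.
rewrite mulrA mulrN mulrV; first by rewrite mulN1r subrr.
by rewrite unitfE pnatr_eq0.
Qed.



Lemma fact_neq0 k : (k`!)%:R != 0 :> rat.
Proof. by rewrite pnatr_eq0 -lt0n fact_gt0. Qed.

Lemma fact_inv m j : (j <= m)%N ->
  ((j`!)%:R^-1 * ((m - j)`!)%:R^-1 : rat) = ('C(m, j))%:R / (m`!)%:R.
Proof.
move=> hj; rewrite -(bin_fact hj) !natrM.
have h1 := fact_neq0 j; have h2 := fact_neq0 (m - j).
have h3 : ('C(m, j))%:R != 0 :> rat by rewrite pnatr_eq0 -lt0n bin_gt0.
field; rewrite h1 h2 h3 //.
Qed.



Definition fs N (s : {poly rat}) : {poly {poly rat}} :=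
  \poly_(k < N) ((bernoulli k / (k`!)%:R) *: s ^+ k).
Definition us N (s : {poly rat}) : {poly {poly rat}} :=
  \poly_(k < N) (((k.+1)`!)%:R^-1 *: s ^+ k).
Definition eqN N (p q : {poly {poly rat}}) := forall i, (i < N)%N -> p`_i = q`_i.

Lemma eqN_refl N p : eqN N p p. Proof. by []. Qed.
Lemma eqN_sym N p q : eqN N p q -> eqN N q p.
Proof. by move=> h i hi; rewrite h. Qed.
Lemma eqN_trans N p q r : eqN N p q -> eqN N q r -> eqN N p r.
Proof. by move=> h1 h2 i hi; rewrite h1 // h2. Qed.
Lemma eqN_add N p p' q q' : eqN N p p' -> eqN N q q' -> eqN N (p + q) (p' + q').
Proof. by move=> h1 h2 i hi; rewrite !coefD h1 // h2. Qed.
Lemma eqN_mull N p p' q : eqN N p p' -> eqN N (q * p) (q * p').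
Proof.
move=> h i hi; rewrite !coefM; apply: eq_bigr => j _; rewrite h //.
exact: leq_ltn_trans (leq_subr _ _) hi.
Qed.
Lemma eqN_mulr N p p' q : eqN N p p' -> eqN N (p * q) (p' * q).
Proof. by move=> h; rewrite ![_ * q]mulrC; apply: eqN_mull. Qed.
Lemma eqN_eq N p q : p = q -> eqN N p q. Proof. by move->. Qed.

Lemma fu N s : eqN N (fs N s * us N s) 1.
Proof.
move=> i hi; rewrite coefM coef1.
transitivity (\sum_(j < i.+1) ((((i.+1 - j)`!)%:R^-1 * (bernoulli j / (j`!)%:R)) *: s ^+ i)).
  apply: eq_bigr => j _; rewrite !coef_poly.
  have hj : (j < N)%N by exact: leq_ltn_trans (leq_ord j) hi.
  have hij : (i - j < N)%N by exact: leq_ltn_trans (leq_subr _ _) hi.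
  rewrite hj hij -scalerAl -scalerAr scalerA -exprD subnKC; last by rewrite -ltnS.
  rewrite subSn; last by rewrite -ltnS.
  by rewrite [in RHS]mulrC.
rewrite -scaler_suml.
case: i hi => [|i] hi.
  rewrite big_ord1 /= bern0 expr0.
  rewrite (_ : (1-0)`! = 1) // (_ : 0`! = 1) // !mulr1n !invr1 !mul1r.
  by rewrite scale1r.
have -> : \sum_(j < i.+2) (((i.+2 - j)`!)%:R^-1 * (bernoulli j / (j`!)%:R)) = 0.
  transitivity (((i.+2)`!)%:R^-1 * \sum_(j < i.+2) ('C(i.+2, j))%:R * bernoulli j).
    rewrite mulr_sumr; apply: eq_bigr => j _.
    rewrite mulrCA mulrA -mulrA (mulrC ((i.+2 - j)`!%:R^-1)) fact_inv; last by rewrite ltnW.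
    by ring.
  by rewrite bern_sum // mulr0.
by rewrite scale0r.
Qed.

Lemma uf N s : eqN N (us N s * fs N s) 1.
Proof. by rewrite mulrC; apply: fu. Qed.



Lemma subpred k j : (j < k)%N -> (k - j = (k.-1 - j).+1)%N.
Proof. by case: k => // k hj; rewrite /= subSn. Qed.

Lemma binom_key (s r : {poly rat}) k :
  (((k.+1)`!)%:R^-1 : rat) *: (s + r) ^+ k.+1 =
  ((k.+1)`!)%:R^-1 *: s ^+ k.+1 + ((k.+1)`!)%:R^-1 *: r ^+ k.+1 +
  s * r * \sum_(j < k) ((((j.+1)`!)%:R^-1 *: s ^+ j) *
                        ((((k.-1 - j).+1)`!)%:R^-1 *: r ^+ (k.-1 - j))).
Proof.
rewrite addrC exprDn big_ord_recr big_ord_recl /=.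
rewrite !subnn !subn0 !expr0 mulr1 mul1r bin0 binn !mulr1n.
rewrite !scalerDr.
set M := (_ *: \sum_(i < k) _).
suff -> : M = s * r * \sum_(j < k) ((((j.+1)`!)%:R^-1 *: s ^+ j) *
                        ((((k.-1 - j).+1)`!)%:R^-1 *: r ^+ (k.-1 - j))).
  by rewrite addrC addrA.
rewrite /M scaler_sumr mulr_sumr; apply: eq_bigr => j _.
have hj : (j < k)%N := ltn_ord j.
rewrite -scalerMnr scalerMnl -scalerAl -!scalerAr scalerA -mulr_natr.
rewrite /bump /= add1n subSS.
have ek : (k - j = (k.-1 - j).+1)%N by apply: subpred.
rewrite -ek; congr (_ *: _).
  rewrite -[(k - j)%N]subSS fact_inv; last exact: ltnW.
  by rewrite mulrC.
by rewrite ek !exprS; ring.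
Qed.



Lemma U_id N s r : eqN N ((s + r)%:P * us N (s + r))
  (s%:P * us N s + r%:P * us N r + (s * r)%:P * ('X * (us N s * us N r))).
Proof.
move=> i hi; rewrite !coefD !coefCM coefXM !coef_poly hi.
rewrite -!scalerAr -!exprS binom_key; congr (_ + _).
congr (_ * _).
case: i hi => [|i] hi; first by rewrite big_ord0.
rewrite /= coefM.
apply: eq_bigr => j _.
have hj : (j < N)%N by apply: leq_ltn_trans (leq_ord j) (ltnW hi).
have hij : (i - j < N)%N by apply: leq_ltn_trans (leq_subr _ _) (ltnW hi).
by rewrite !coef_poly hj hij.
Qed.



Lemma eqN_cancel N s q : eqN N (q * (us N s * fs N s)) q.
Proof. by apply: eqN_trans (@eqN_mull N _ _ q (@uf N s)) _; rewrite mulr1. Qed.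

Lemma F_id N s r : eqN N ((s + r)%:P * (fs N s * fs N r))
  (fs N (s + r) * (s%:P * fs N r + r%:P * fs N s + (s * r)%:P * 'X)).
Proof.
set W := fs N s * fs N r * fs N (s + r).
have H := @eqN_mulr N _ _ W (@U_id N s r).
apply: eqN_trans (_ : eqN N _ ((s + r)%:P * us N (s + r) * W)) _.
  apply: eqN_sym.
  rewrite (_ : _ * W = ((s + r)%:P * (fs N s * fs N r)) * (us N (s + r) * fs N (s + r))).
    exact: eqN_cancel.
  by rewrite /W; ring.
apply: eqN_trans H _.
set A := s%:P * fs N r * fs N (s + r).
set B := r%:P * fs N s * fs N (s + r).
set C := (s * r)%:P * 'X * fs N (s + r).
rewrite (_ : _ * W = A * (us N s * fs N s) + B * (us N r * fs N r)
   + (C * (us N s * fs N s)) * (us N r * fs N r)); last by rewrite /A /B /C /W; ring.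
apply: eqN_trans (_ : eqN N _ (A + B + C)) _.
  apply: eqN_add; first by apply: eqN_add; apply: eqN_cancel.
  apply: eqN_trans (@eqN_cancel N r _) _; exact: eqN_cancel.
by rewrite /A /B /C; apply: eqN_eq; ring.
Qed.



Lemma fs0 N : (0 < N)%N -> fs N 0 = 1.
Proof.
move=> hN; apply/polyP => k; rewrite coef_poly coef1 expr0n.
case: k => [|k]; first by rewrite hN /= bern0 div1r invr1 scale1r.
by rewrite /= scaler0; case: ifP.
Qed.

Lemma bern_odd k : (1 < k)%N -> odd k -> bernoulli k = 0.
Proof.
move=> hk ok.
have := @F_id k.+1 1 (-1) k (ltnSn k).
rewrite subrr polyC0 mul0r coef0 fs0 // mul1r !coefD !coefCM coefX.
rewrite (gtn_eqF hk) mulr0 !coef_poly ltnSn expr1n -signr_odd ok expr1.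
move/(congr1 (fun p : {poly rat} => p`_0)).
rewrite coef0 addr0 coefD !coefM !big_ord1 !coefZ !coefN !coef1 /=.
set c := bernoulli k / _.
move=> h.
have : c = 0.
  have e : c * 2 = - (1 * (c * -1) + -1 * (c * 1)) by ring.
  rewrite -h oppr0 in e.
  by move: e => /eqP; rewrite mulf_eq0 pnatr_eq0 orbF => /eqP.
move/eqP; rewrite /c mulf_eq0 invr_eq0 (negbTE (fact_neq0 k)) orbF.
by move/eqP.
Qed.



Definition Lf (p : {poly rat}) : rat := \sum_(i < size p) p`_i / (i.+1)%:R.

Lemma Lf_widen (p : {poly rat}) M : (size p <= M)%N ->
  Lf p = \sum_(i < M) p`_i / (i.+1)%:R.
Proof.
move=> hM; rewrite /Lf (big_ord_widen _ (fun i => p`_i / (i.+1)%:R) hM).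
rewrite big_mkcond; apply: eq_bigr => i _; case: ifP => // /negbT.
by rewrite -leqNgt => h; rewrite nth_default // mul0r.
Qed.

Lemma Lf0 : Lf 0 = 0.
Proof. by rewrite /Lf size_poly0 big_ord0. Qed.

Lemma LfD (p q : {poly rat}) : Lf (p + q) = Lf p + Lf q.
Proof.
set M := maxn (size p) (size q).
rewrite (Lf_widen (M := M) (size_add _ _)) (Lf_widen (M := M) (leq_maxl _ _)).
rewrite (Lf_widen (M := M) (leq_maxr _ _)) -big_split; apply: eq_bigr => i _.
by rewrite coefD mulrDl.
Qed.

Lemma LfZ c (p : {poly rat}) : Lf (c *: p) = c * Lf p.
Proof.
rewrite (Lf_widen (M := size p) (size_scale_leq _ _)) /Lf mulr_sumr.
by apply: eq_bigr => i _; rewrite coefZ mulrA.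
Qed.

Lemma LfN (p : {poly rat}) : Lf (- p) = - Lf p.
Proof. by rewrite -scaleN1r LfZ mulN1r. Qed.

Lemma Lf_sum I (r : seq I) (P : pred I) (F : I -> {poly rat}) :
  Lf (\sum_(i <- r | P i) F i) = \sum_(i <- r | P i) Lf (F i).
Proof. exact: (big_morph Lf LfD Lf0). Qed.

Lemma Lf_Xn a : Lf ('X ^+ a) = ((a.+1)%:R)^-1.
Proof.
rewrite /Lf size_polyXn big_ord_recr /= big1 ?add0r.
  by rewrite coefXn eqxx div1r.
by move=> i _; rewrite coefXn (ltn_eqF (ltn_ord i)) mul0r.
Qed.

Lemma Lf_beta b a : Lf ('X ^+ a * (1 - 'X) ^+ b) =
  ((a`! * b`!)%:R) / (((a + b).+1)`!)%:R.
Proof.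
elim: b a => [|b IH] a.
  rewrite expr0 mulr1 Lf_Xn addn0 fact0 muln1 factS natrM.
  have := fact_neq0 a; have : (a.+1)%:R != 0 :> rat by rewrite pnatr_eq0.
  move=> h1 h2; field; by rewrite h2 /= addrC natr1 pnatr_eq0.
rewrite exprS mulrBl mul1r mulrBr mulrA -exprSr LfD LfN IH IH.
rewrite addSn addnS !factS !natrM.
have := fact_neq0 a; have := fact_neq0 b; have := fact_neq0 (a + b).
have h4 : ((a + b).+1)%:R != 0 :> rat by rewrite pnatr_eq0.
have h5 : ((a + b).+2)%:R != 0 :> rat by rewrite pnatr_eq0.
move=> h1 h2 h3.
have h4' : 1 + (a%:R + b%:R) != 0 :> rat by rewrite -natrD -mulrS.
have h5' : 2 + (a%:R + b%:R) != 0 :> rat by rewrite -natrD -natrD add2n.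
by field; rewrite h1 h4' h5'.
Qed.



Lemma conv_main n : (2 < n)%N -> ~~ odd n ->
 \sum_(k < n.+1) bernoulli k * bernoulli (n - k) / ((n.+1)`!)%:R =
 \sum_(j < n.+1) bernoulli j / (j`!)%:R *
     (bernoulli (n - j) * 2 / (((n - j).+2)`!)%:R).
Proof.
move=> hn en.
have E := @F_id n.+1 'X (1 - 'X) n (ltnSn n).
move/(congr1 Lf): E.
rewrite addrC subrK mul1r !coefM !Lf_sum.
have hm : forall i : 'I_n.+1, (n - i < n.+1)%N.
  by move=> i; rewrite ltnS leq_subr.
move=> E; rewrite -[LHS]/(\sum_(k < n.+1) _) -[RHS]/(\sum_(k < n.+1) _).
transitivity (\sum_(i < n.+1) Lf ((fs n.+1 'X)`_i * (fs n.+1 (1 - 'X))`_(n - i))).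
  apply: eq_bigr => i _; rewrite !coef_poly (ltn_ord i) hm.
  rewrite -scalerAl -scalerAr scalerA LfZ Lf_beta subnKC; last by rewrite -ltnS.
  have := fact_neq0 i; have := fact_neq0 (n - i); have := fact_neq0 n.+1.
  by move=> h1 h2 h3; rewrite natrM; field; rewrite h1 h2 h3.
rewrite E; apply: eq_bigr => i _.
rewrite !coefD !coefCM coefX !coef_poly (ltn_ord i) hm expr1n.
case: eqP => hm1.
  have hi : i = n.-1 :> nat by move: hm1 (ltn_ord i); clear; lia.
  have oi : odd i.
    rewrite hi; move: en hn; clear; case: n => //= n'; by rewrite negbK.
  rewrite bern_odd //; last by rewrite hi; move: hn; clear; lia.
  by rewrite !mul0r scale0r mul0r Lf0.
rewrite mulr0 addr0 -scalerAl mul1r LfZ; congr (_ * _).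
set m := (n - i)%N.
have e1 : 'X * (1 - 'X) ^+ m = 'X ^+ 1 * (1 - 'X) ^+ m :> {poly rat} by [].
have e2 : (1 - 'X) * 'X ^+ m = 'X ^+ m * (1 - 'X) ^+ 1 :> {poly rat} by rewrite mulrC.
rewrite LfD -!scalerAr !LfZ e1 e2 !Lf_beta.
rewrite add1n addn1 muln1 mul1n.
clearbody m.
have := fact_neq0 m; have := fact_neq0 m.+2.
by move=> h1 h2; field; rewrite h1 h2.
Qed.



Lemma sum_parity (F : nat -> rat) m :
  \sum_(0 <= j < (2 * m).+1) F j =
  \sum_(0 <= k < m.+1) F (2 * k)%N + \sum_(0 <= k < m) F (2 * k).+1.
Proof.
elim: m => [|m IH]; first by rewrite big_nat1 big_nat1 big_geq // addr0.
rewrite (big_nat_recr m.+1) // (big_nat_recr m) //=.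
rewrite (_ : (2 * m.+1).+1 = ((2 * m).+1).+2)%N; last by lia.
rewrite (big_nat_recr _.+1) // (big_nat_recr _) //= IH.
rewrite (_ : (2 * m.+1 = (2 * m).+2)%N); last by lia.
rewrite [\sum_(0 <= k < m.+1) F (2 * k).+1](big_nat_recr m) //= [\sum_(0 <= k < m.+1) F (2 * k)%N](big_nat_recr m) //=.
ring.
Qed.

Lemma odd_part m : (1 < m)%N -> forall k, (k < m)%N ->
  bernoulli (2 * k).+1 * bernoulli (2 * m - (2 * k).+1) = 0.
Proof.
move=> hm k hk; case: k hk => [|k] hk.
  rewrite [X in _ * bernoulli X](_ : _ = (2 * m).-1)%N; last by lia.
  rewrite (@bern_odd (2 * m).-1) ?mulr0 //; first by lia.
  rewrite (_ : (2 * m).-1 = (2 * m.-1).+1)%N; last by lia.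
  by rewrite /= oddM.
rewrite bern_odd ?mul0r //; first by lia.
Qed.



Theorem mainTheorem6 (n : nat) (hn : (2 <= n)%N) :
  \sum_(1 <= k < n.+1) bernoulli (2 * k) * bernoulli (2 * n - 2 * k)
  = (n.+1%:R)^-1 *
      \sum_(1 <= k < n.+1) bernoulli (2 * k) * bernoulli (2 * n - 2 * k)
                             * ('C(2 * n + 2, 2 * k + 2))%:R
    + (2 * n)%:R * bernoulli (2 * n).
Proof.
set S := \sum_(1 <= k < n.+1) _.
set T := \sum_(1 <= k < n.+1) _.
set B := bernoulli (2 * n).
have H := @conv_main (2 * n) (ltac:(lia)) (ltac:(by rewrite oddM)).
have L1 : \sum_(k < (2*n).+1) bernoulli k * bernoulli (2*n - k) / ((2*n).+1)`!%:R
    = (B + S) / ((2*n).+1)`!%:R.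
  rewrite -mulr_suml; congr (_ / _).
  rewrite -(big_mkord xpredT (fun k => bernoulli k * bernoulli (2*n - k))) sum_parity.
  have Z : \sum_(0 <= k < n) bernoulli (2*k).+1 * bernoulli (2*n - (2*k).+1) = 0.
    rewrite big_nat_cond big1 // => k /andP [/andP [_ hk] _]; exact: odd_part.
  rewrite Z addr0.
  by rewrite big_ltn // muln0 subn0 bern0 mul1r.
have C2 : 'C(2 * n + 2, 2) = (n.+1 * (2 * n).+1)%N.
  rewrite bin2 (_ : ((2 * n + 2) * (2 * n + 2).-1 = (n.+1 * (2 * n).+1).*2)%N).
    by rewrite doubleK.
  by rewrite -mul2n; lia.
have R1 : \sum_(j < (2*n).+1) bernoulli j / (j`!)%:R *
     (bernoulli (2*n - j) * 2 / (((2*n - j).+2)`!)%:R)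
   = 2 / ((2 * n).+2)`!%:R * ('C(2 * n + 2, 2)%:R * B + T).
  transitivity (\sum_(j < (2*n).+1) 2 / ((2 * n).+2)`!%:R *
     ('C(2 * n + 2, j)%:R * bernoulli j * bernoulli (2*n - j))).
    apply: eq_bigr => j _.
    have hj : (j <= 2 * n)%N by rewrite -ltnS.
    have e := @fact_inv (2 * n + 2) j (ltac:(lia)).
    rewrite (_ : (2 * n + 2 - j = (2 * n - j).+2)%N) in e; last by lia.
    rewrite (_ : (2 * n + 2 = (2 * n).+2)%N) in e; last by lia.
    rewrite (_ : bernoulli j / (j`!)%:R * (bernoulli (2*n - j) * 2 / (((2*n - j).+2)`!)%:R)
      = bernoulli j * bernoulli (2*n - j) * 2 * ((j`!)%:R^-1 * (((2*n - j).+2)`!)%:R^-1)).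
      rewrite e (_ : (2 * n + 2 = (2 * n).+2)%N) //; last by lia.
      by ring.
    by ring.
  rewrite -mulr_sumr; congr (_ * _).
  rewrite -(big_mkord xpredT (fun j => 'C(2 * n + 2, j)%:R * bernoulli j * bernoulli (2*n - j))).
  rewrite sum_parity.
  have Z : \sum_(0 <= k < n) 'C(2 * n + 2, (2 * k).+1)%:R * bernoulli (2*k).+1 *
       bernoulli (2*n - (2*k).+1) = 0.
    rewrite big_nat_cond big1 // => k /andP [/andP [_ hk] _].
    by rewrite -mulrA odd_part ?mulr0.
  rewrite Z addr0 big_nat_rev big_ltn //= add0n subSS subn0.
  rewrite subnn bern0 mulr1 -/B; congr (_ + _).
    rewrite -(@bin_sub (2 * n + 2) 2); last by lia.
    by rewrite (_ : (2 * n + 2 - 2 = 2 * n)%N) //; lia.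
  apply: eq_big_nat => k /andP [hk1 hk2].
  rewrite ?add0n subSS.
  rewrite (_ : (2 * (n - k) = 2 * n - 2 * k)%N); last by lia.
  rewrite (_ : (2 * n - (2 * n - 2 * k) = 2 * k)%N); last by lia.
  rewrite -(@bin_sub (2 * n + 2) (2 * k + 2)); last by lia.
  rewrite (_ : (2 * n + 2 - (2 * k + 2) = 2 * n - 2 * k)%N); last by lia.
  by ring.
rewrite L1 R1 C2 in H.
have F1 := fact_neq0 (2 * n).+1.
have H2 : B + S = ((B + S) / ((2 * n).+1)`!%:R) * ((2 * n).+1)`!%:R.
  by field.
rewrite H in H2.
have -> : S = (B + S) - B by ring.
rewrite H2.
have hn1 : (n%:R + 1) != 0 :> rat by rewrite natr1 pnatr_eq0.
rewrite (factS (2 * n).+1) !natrM.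
clearbody S T B.
have h2 : ((2 * n).+2)%:R != 0 :> rat by rewrite pnatr_eq0.
field; apply/and4P; split.
- by rewrite -mulrS pnatr_eq0.
- exact: (fact_neq0 (2 * n)).
- by rewrite -natrM -mulrS pnatr_eq0.
- by rewrite -natrM -natrD pnatr_eq0.
Qed.
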